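(* Let $G$ be a tight graph with dense set $T$ and co-components $G_1,\dots,G_r$, let $T_i=T\cap V(G_i)$, $m_i=|T_i|$, and let $p_i$ be the common degree in $G_i$ of the vertices of $T_i$. Suppose $m_i=p_i+1$ for every $i$. Then each $G_i$ is a tight graph with $m(G_i)=m_i$ whose set of dense vertices is $T_i$, and $G$ has a b-colouring with exactly $m(G)$ colours if and only if every $G_i$ has a b-colouring with exactly $m(G_i)$ colours.
   Context: A co-component of $G$ is the subgraph of $G$ induced by the vertex set of a connected component of the complement $\overline{G}$; distinct co-components are completely joined in $G$. A colouring of $G$ is a map $c:V(G)\to\mathbb{Z}^+$ with adjacent vertices receiving distinct colours. A vertex is b-chromatic under $c$ if it is adjacent to a vertex of every colour used by $c$ other than its own; a b-colouring is a colouring in which every colour class has a b-chromatic vertex. $m(G)$ is the largest $k$ such that $G$ has at least $k$ vertices of degree at least $k-1$; a vertex of degree at least $m(G)-1$ is dense; $G$ is tight if it has exactly $m(G)$ dense vertices, each of degree exactly $m(G)-1$. (For a tight graph, all vertices of $T_i$ have the same degree in $G_i$.) *)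

(* Defs.v *)
(* A finite simple graph is a symmetric irreflexive relation
   e : rel V on a finType V. Induced subgraphs G[S] are handled by working
   relative to a vertex set S : {set V}. *)
From mathcomp Require Import all_boot.
Set Implicit Arguments. Unset Strict Implicit. Unset Printing Implicit Defensive.

Section Graphs.
Variables (V : finType) (e : rel V).

Definition deg_in (S : {set V}) (x : V) : nat := #|[set y in S | e x y]|.

(* m(G[S]) : the largest k such that G[S] has at least k vertices of degree
   at least k-1 (k = 0 always qualifies; k <= |S|). *)
Definition m_in (S : {set V}) : nat :=
  \max_(k < #|S|.+1 | k <= #|[set x in S | k.-1 <= deg_in S x]|) k.

Definition dense_in (S : {set V}) : {set V} :=
  [set x in S | (m_in S).-1 <= deg_in S x].

Definition tight_in (S : {set V}) : Prop :=
  #|dense_in S| = m_in S /\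
  (forall x, x \in dense_in S -> deg_in S x = (m_in S).-1).

Definition colouring_in (S : {set V}) (c : V -> nat) : Prop :=
  (forall x, x \in S -> 0 < c x) /\
  (forall x y, x \in S -> y \in S -> e x y -> c x != c y).

Definition colours_in (S : {set V}) (c : V -> nat) : seq nat :=
  undup [seq c x | x <- enum S].

Definition b_chromatic_in (S : {set V}) (c : V -> nat) (x : V) : Prop :=
  forall k, k \in colours_in S c -> k != c x -> exists2 y, y \in S & e x y && (c y == k).

Definition b_colouring_in (S : {set V}) (c : V -> nat) : Prop :=
  colouring_in S c /\
  (forall k, k \in colours_in S c -> exists2 x, x \in S & (c x = k) /\ b_chromatic_in S c x).

Definition has_b_colouring_exact (S : {set V}) (k : nat) : Prop :=
  exists c : V -> nat, b_colouring_in S c /\ size (colours_in S c) = k.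

(* complement relation and co-components (vertex sets of the connected
   components of the complement graph) *)
Definition compl_rel : rel V := [rel x y | (x != y) && ~~ e x y].

Definition co_component (C : {set V}) : Prop :=
  exists x, C = [set y | connect compl_rel x y].

End Graphs.

(* Main.v *)
Require Import Defs.
From mathcomp Require Import all_boot.
From Stdlib Require Import Classical ClassicalEpsilon.
Set Implicit Arguments. Unset Strict Implicit. Unset Printing Implicit Defensive.

Lemma uniq_map_inj (T1 T2 : eqType) (f : T1 -> T2) (s : seq T1) :
  uniq (map f s) -> {in s &, injective f}.
Proof.
elim: s => [|x s IH] //= /andP[nx us] a b.
rewrite !in_cons => /orP[/eqP->|ha] /orP[/eqP->|hb] //.
- move=> fe; exfalso; move/negP: nx; apply; rewrite fe; exact: map_f.
- move=> fe; exfalso; move/negP: nx; apply; rewrite -fe; exact: map_f.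
- exact: IH.
Qed.

Section G.
Variables (V : finType) (e : rel V).
Hypotheses (e_sym : symmetric e) (e_irr : irreflexive e).

Definition cc (x : V) : {set V} := [set y | connect (compl_rel e) x y].

Lemma compl_sym : symmetric (compl_rel e).
Proof. by move=> x y; rewrite /compl_rel /= eq_sym e_sym. Qed.

Lemma csym : connect_sym (compl_rel e).
Proof. exact: sym_connect_sym compl_sym. Qed.

Lemma cc_self x : x \in cc x.
Proof. by rewrite inE connect0. Qed.

Lemma cc_eq x y : y \in cc x -> cc y = cc x.
Proof.
rewrite inE => cxy; apply/setP => z; rewrite !inE.
apply/idP/idP => h; first exact: connect_trans cxy h.
by apply: connect_trans h; rewrite csym.
Qed.

Lemma co_cc C x : co_component e C -> x \in C -> C = cc x.
Proof. by move=> [x0 ->] h; rewrite (cc_eq h). Qed.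

Lemma cc_co x : co_component e (cc x).
Proof. by exists x. Qed.

Lemma co_adj C x y : co_component e C -> x \in C -> y \notin C -> e x y.
Proof.
move=> hC hx hy; rewrite (co_cc hC hx) in hy.
case: (eqVneq x y) => [exy|nxy]; first by rewrite exy cc_self in hy.
apply/negPn/negP => nxy'; move/negP: hy; apply.
rewrite inE; apply: connect1; by rewrite /compl_rel /= nxy nxy'.
Qed.

Lemma deg_split C x : co_component e C -> x \in C ->
  deg_in e [set: V] x = deg_in e C x + #|~: C|.
Proof.
move=> hC hx; rewrite /deg_in.
rewrite -(cardsID C [set y in [set: V] | e x y]).
congr (_ + _); apply: eq_card => y; rewrite !inE.
  by rewrite andbC.
case hy: (y \in C) => //=; by rewrite (co_adj hC hx) ?hy.
Qed.

Lemma m_in_eq (S : {set V}) k : k <= #|S| -> k <= #|[set x in S | k.-1 <= deg_in e S x]| ->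
  (forall j, j <= #|S| -> j <= #|[set x in S | j.-1 <= deg_in e S x]| -> j <= k) ->
  m_in e S = k.
Proof.
move=> h1 h2 h3; apply/eqP; rewrite eqn_leq; apply/andP; split.
  apply/bigmax_leqP => i hi; apply: h3 => //; by rewrite -ltnS ltn_ord.
have hk : k < #|S|.+1 by [].
exact: (@leq_bigmax_cond _ (fun i : 'I_#|S|.+1 => i <= #|[set x in S | i.-1 <= deg_in e S x]|) (fun i => nat_of_ord i) (Ordinal hk)).
Qed.


Lemma size_cols (S A : {set V}) (c : V -> nat) : A \subset S -> {in A &, injective c} ->
  (forall x, x \in S -> exists2 a, a \in A & c a = c x) ->
  size (colours_in S c) = #|A|.
Proof.
move=> sAS inj hx; rewrite cardE -(size_map c).
apply: perm_size; apply: uniq_perm; first exact: undup_uniq.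
  by rewrite map_inj_in_uniq ?enum_uniq // => a b; rewrite !mem_enum; apply: inj.
move=> k; rewrite mem_undup; apply/mapP/mapP => [[x]|[a]].
  rewrite mem_enum => /hx [a ha <-] ->; by exists a; rewrite ?mem_enum.
rewrite mem_enum => ha ->; exists a => //; rewrite mem_enum; exact: (subsetP sAS).
Qed.

Lemma bstruct (S A : {set V}) (c : V -> nat) : A \subset S ->
  (forall x, x \in S -> #|A|.-1 <= deg_in e S x -> x \in A) ->
  b_colouring_in e S c -> size (colours_in S c) = #|A| ->
  [/\ {in A &, injective c},
      (forall x, x \in S -> exists2 a, a \in A & c a = c x) &
      (forall a, a \in A -> b_chromatic_in e S c a)].
Proof.
move=> sAS hdense [[cpos cprop] hb] hsz.
set K := colours_in S c.
have Kc : forall x, x \in S -> c x \in K.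
  by move=> x hx; rewrite mem_undup; apply: map_f; rewrite mem_enum.
have step1 : forall x, x \in S -> b_chromatic_in e S c x -> x \in A.
  move=> x hx hbx; apply: hdense => //.
  set s := filter (predC1 (c x)) K.
  have us : uniq s by apply: filter_uniq; apply: undup_uniq.
  have sub : {subset s <= map c (enum [set y in S | e x y])}.
    move=> k; rewrite mem_filter /= => /andP[nk kK].
    have [y hy /andP[exy /eqP cy]] := hbx k kK nk.
    by rewrite -cy; apply: map_f; rewrite mem_enum inE hy exy.
  have := uniq_leq_size us sub; rewrite size_map -cardE -/(deg_in e S x).
  apply: leq_trans.
  have := size_filter (predC1 (c x)) K; rewrite -/s => ->.
  have := count_predC (pred1 (c x)) K.
  have -> : count (pred1 (c x)) K = 1.
    by have := count_uniq_mem (c x) (undup_uniq [seq c x | x <- enum S]); rewrite Kc.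
  by rewrite -hsz add1n => <-.
have injA : {in A &, injective c}.
  move=> a b ha hb'; apply: (@uniq_map_inj _ _ c (enum A)); rewrite ?mem_enum //.
  apply: (@leq_size_uniq _ K); first exact: undup_uniq.
    move=> k hk; have [x hx [cx hbx]] := hb k hk.
    by rewrite -cx; apply: map_f; rewrite mem_enum; apply: step1.
  by rewrite size_map -cardE hsz.
split => //.
  move=> x hx; have [a ha [ca hba]] := hb _ (Kc x hx).
  by exists a => //; apply: step1.
move=> a ha; have [x hx [ca hbx]] := hb _ (Kc a (subsetP sAS a ha)).
by rewrite -(injA x a) // step1.
Qed.


Hypothesis Gtight : tight_in e [set: V].
Hypothesis hyp : forall C : {set V}, co_component e C ->
     exists p : nat,
       (forall x, x \in dense_in e [set: V] :&: C -> deg_in e C x = p) /\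
       #|dense_in e [set: V] :&: C| = p.+1.

Local Notation T := (dense_in e [set: V]).
Local Notation m := (m_in e [set: V]).

Lemma part1 C : co_component e C ->
  [/\ tight_in e C, m_in e C = #|T :&: C| & dense_in e C = T :&: C].
Proof.
move=> hC; have [p [hp hcard]] := hyp hC.
have [t ht] : exists t, t \in T :&: C.
  by apply/set0Pn; rewrite -card_gt0 hcard.
have /setIP [tT tC] := ht.
have hm : m.-1 = p + #|~: C|.
  by rewrite -(hp t ht) -(deg_split hC tC) Gtight.2.
have key : forall x, x \in C -> (p <= deg_in e C x) = (x \in T).
  move=> x hx; apply/idP/idP => h.
    by rewrite inE in_setT hm (deg_split hC hx) leq_add2r.
  by rewrite hp //; apply/setIP; split.
have hmC : m_in e C = p.+1.
  apply: m_in_eq.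
  - by rewrite -hcard; apply: subset_leq_card; apply: subsetIr.
  - rewrite -hcard; apply: subset_leq_card; apply/subsetP => x hx.
    have /setIP [xT xC] := hx.
    by rewrite inE xC /= (hp x hx) hcard.
  - move=> j _ hj; rewrite leqNgt; apply/negP => hlt.
    have e0 : [set x in C | j.-1 <= deg_in e C x] = set0.
      apply/setP => x; rewrite !inE; apply/negP => /andP[xC hx].
      have pj : p < j.-1 by move: hlt; case: j {hj hx} => //.
      have xT : x \in T by rewrite -key //; apply: leq_trans hx; apply: ltnW.
      have := hp x; rewrite inE xT xC => /(_ isT) hd.
      by move: hx; rewrite hd leqNgt pj.
    by move: hj; rewrite e0 cards0 leqn0 => /eqP hj0; rewrite hj0 in hlt.
have hD : dense_in e C = T :&: C.
  apply/setP => x; rewrite [in LHS]inE hmC /=.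
  case xC: (x \in C); last by rewrite inE xC andbF.
  by rewrite key // in_setI xC andbT.
split.
- split; first by rewrite hD hmC hcard.
  by move=> x; rewrite hD hmC => hx; apply: hp.
- by rewrite hmC hcard.
- exact: hD.
Qed.


Lemma comp_facts C c : co_component e C -> b_colouring_in e C c ->
  size (colours_in C c) = m_in e C ->
  [/\ {in T :&: C &, injective c},
      (forall x, x \in C -> exists2 a, a \in T :&: C & c a = c x) &
      (forall a, a \in T :&: C -> b_chromatic_in e C c a)].
Proof.
move=> hC hb hsz; have [_ hmC hDC] := part1 hC.
apply: bstruct => //; first exact: subsetIr.
  move=> x xC h; rewrite -hDC inE xC /= hmC; exact: h.
by rewrite -hmC.
Qed.

Lemma fwd : has_b_colouring_exact e [set: V] m ->
  forall C, co_component e C -> has_b_colouring_exact e C (m_in e C).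
Proof.
move=> [c [hbc hsz]] C hC.
have [_ hmC hDC] := part1 hC.
have [inj hsurj hbch] := @bstruct [set: V] T c (subsetT T)
   ltac:(by move=> x _; rewrite Gtight.1 => h; rewrite inE in_setT h) hbc
   ltac:(by rewrite hsz Gtight.1).
case: hbc => [[cpos cprop] hb].
have hsC : forall x, x \in C -> exists2 a, a \in T :&: C & c a = c x.
  move=> x xC; have [a aT ca] := hsurj x (in_setT x).
  exists a => //; rewrite in_setI aT /=; apply/negPn/negP => aC.
  have := cprop x a (in_setT _) (in_setT _) (co_adj hC xC aC).
  by rewrite ca eqxx.
exists c; split; last first.
  rewrite hmC; apply: size_cols => //; first exact: subsetIr.
  move=> a b /setIP[aT _] /setIP[bT _]; exact: inj.
split.
  by split; [move=> x _; apply: cpos | move=> x y _ _; apply: cprop].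
move=> k; rewrite mem_undup => /mapP [x]; rewrite mem_enum => xC ->.
have [a /setIP[aT aC] ca] := hsC x xC.
exists a => //; split => // k' hk' nk'.
have hk'G : k' \in colours_in [set: V] c.
  move: hk'; rewrite !mem_undup => /mapP [y _ ->]; apply: map_f.
  by rewrite mem_enum in_setT.
have [y _ /andP[eay /eqP cy]] := hbch a aT k' hk'G nk'.
exists y; last by rewrite eay cy eqxx.
move: hk'; rewrite mem_undup => /mapP [y']; rewrite mem_enum => y'C ek'.
apply/negPn/negP => yC.
have := cprop y' y (in_setT _) (in_setT _) (co_adj hC y'C yC).
by rewrite cy ek' eqxx.
Qed.


Definition col (F : {set V} -> V -> nat) (x : V) : nat :=
  F (cc x) x * #|{set V}| + enum_rank (cc x).

Lemma col_eq F x y : col F x = col F y <-> F (cc x) x = F (cc y) y /\ cc x = cc y.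
Proof.
split; last by case=> h1 h2; rewrite /col h1 h2.
rewrite /col => h.
have hr : nat_of_ord (enum_rank (cc x)) = enum_rank (cc y).
  move: (congr1 (modn^~ #|{set V}|) h) => /=.
  by rewrite !modnMDl !modn_small.
rewrite hr in h; move/addIn: h => /eqP; rewrite eqn_pmul2r; last first.
  exact: leq_ltn_trans (leq0n _) (ltn_ord (enum_rank (cc x))).
move/eqP => ->; split => //; apply: enum_rank_inj; exact: ord_inj.
Qed.

Lemma bwd : (forall C, co_component e C -> has_b_colouring_exact e C (m_in e C)) ->
  has_b_colouring_exact e [set: V] m.
Proof.
move=> H.
have H' : forall C : {set V}, exists c : V -> nat, co_component e C ->
    b_colouring_in e C c /\ size (colours_in C c) = m_in e C.
  move=> C; case: (classic (co_component e C)) => hC.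
    by have [c hc] := H C hC; exists c.
  by exists (fun _ => 0).
pose F C := proj1_sig (constructive_indefinite_description _ (H' C)).
have hF : forall C, co_component e C ->
    b_colouring_in e C (F C) /\ size (colours_in C (F C)) = m_in e C.
  move=> C; exact: (proj2_sig (constructive_indefinite_description _ (H' C))).
have fct : forall x, [/\ {in T :&: cc x &, injective (F (cc x))},
      (forall y, y \in cc x -> exists2 a, a \in T :&: cc x & F (cc x) a = F (cc x) y) &
      (forall a, a \in T :&: cc x -> b_chromatic_in e (cc x) (F (cc x)) a)].
  move=> x; have [hb hs] := hF _ (cc_co x); exact: comp_facts (cc_co x) hb hs.
have cpr : forall x, colouring_in e (cc x) (F (cc x)).
  by move=> x; have [[hc _] _] := hF _ (cc_co x).
pose c := col F.
have surj : forall x, exists2 a, a \in T & c a = c x.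
  move=> x; have [_ hs _] := fct x.
  have [a /setIP[aT ax] ha] := hs x (cc_self x).
  exists a => //; apply/col_eq; rewrite (cc_eq ax); split => //.
exists c; split; last first.
  rewrite -Gtight.1; apply: size_cols => //; idtac.
  move=> a b aT bT /col_eq [h1 h2].
    have [inj _ _] := fct a.
    have bcc : b \in cc a by rewrite h2 cc_self.
    apply: inj; rewrite ?in_setI ?aT ?bT ?cc_self ?bcc //.
    by rewrite {2}h2.
split.
  split.
    move=> x _; rewrite /c /col; have [cpos _] := cpr x.
    rewrite addn_gt0 muln_gt0 cpos ?cc_self //=.
    by rewrite (leq_ltn_trans (leq0n _) (ltn_ord (enum_rank (cc x)))).
  move=> x y _ _ exy; apply/negP => /eqP /col_eq [h1 h2].
  have ycc : y \in cc x by rewrite h2 cc_self.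
  have [_ cprop] := cpr x.
  have := cprop x y (cc_self x) ycc exy.
  by rewrite h1 h2 eqxx.
move=> k; rewrite mem_undup => /mapP [x _ ->].
have [a aT ca] := surj x.
exists a; first exact: in_setT.
split => // k' hk' nk'.
move: hk'; rewrite mem_undup => /mapP [y _ ek']; subst k'.
case ya: (y \in cc a).
  have hya : cc y = cc a by rewrite (cc_eq ya).
  have [_ _ hbch] := fct a.
  have nF : F (cc a) y != F (cc a) a.
    apply/negP => /eqP h; move/negP: nk'; apply; apply/eqP; apply/col_eq.
    by rewrite hya h.
  have hin : F (cc a) y \in colours_in (cc a) (F (cc a)).
    by rewrite mem_undup; apply: map_f; rewrite mem_enum.
  have [z zcc /andP[eaz /eqP Fz]] := hbch a ltac:(by rewrite in_setI aT cc_self) _ hin nF.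
  exists z; first exact: in_setT.
  rewrite eaz /=; apply/eqP/col_eq; rewrite (cc_eq zcc) hya; split => //.
exists y; first exact: in_setT.
by rewrite (co_adj (cc_co a) (cc_self a)) ?ya //= eqxx.
Qed.

End G.

Theorem mainTheorem12 (V : finType) (e : rel V)
  (e_sym : symmetric e) (e_irr : irreflexive e)
  (Gtight : tight_in e [set: V])
  (hyp : forall C : {set V}, co_component e C ->
     exists p : nat,
       (forall x, x \in dense_in e [set: V] :&: C -> deg_in e C x = p) /\
       #|dense_in e [set: V] :&: C| = p.+1) :
  (forall C : {set V}, co_component e C ->
     [/\ tight_in e C,
         m_in e C = #|dense_in e [set: V] :&: C| &
         dense_in e C = dense_in e [set: V] :&: C]) /\
  (has_b_colouring_exact e [set: V] (m_in e [set: V]) <->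
   (forall C : {set V}, co_component e C -> has_b_colouring_exact e C (m_in e C))).
Proof.
split; first exact: part1.
split; [exact: fwd | exact: bwd].
Qed.
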